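(* Let $\rho_\mathrm{A}$ be a density matrix on $\mathbb C^4$ with eigenvalues $p_1\ge p_2\ge p_3\ge p_4$. Define $$C_4(\rho_\mathrm{A})=\sup\ \tfrac12\operatorname{tr}\big(\rho_\mathrm{A}\,[A_1(A_2+A_4)+A_3(A_2-A_4)]\big),$$ the supremum being over Hermitian operators $A_1,A_2,A_3,A_4$ on $\mathbb C^4$ with $A_k^2=I$ for all $k$ and $[A_1,A_2]=[A_1,A_4]=[A_3,A_2]=[A_3,A_4]=0$. Then $$C_4(\rho_\mathrm{A})=\max\Big\{1,\ \sqrt{2\big[(p_1-p_4)^2+(p_2-p_3)^2\big]}\Big\}.$$ *)

(* Defs.v *)
From HB Require Import structures.
From mathcomp Require Import all_boot all_order all_algebra.
From mathcomp Require Import complex.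
From mathcomp Require Import boolp classical_sets reals.

Set Implicit Arguments.
Unset Strict Implicit.
Unset Printing Implicit Defensive.

Import Order.TTheory GRing.Theory Num.Theory.
Local Open Scope ring_scope.
Local Open Scope classical_set_scope.

Definition adjmx (R : rcfType) (m n : nat) (M : 'M[R[i]]_(m, n)) : 'M[R[i]]_(n, m) :=
  map_mx (@conjc R) M^T.

Definition hermitian (R : rcfType) (n : nat) (M : 'M[R[i]]_n) : Prop :=
  adjmx M = M.

Definition density (R : rcfType) (n : nat) (rho : 'M[R[i]]_n) : Prop :=
  [/\ hermitian rho,
      (forall v : 'cV[R[i]]_n, 0 <= (adjmx v *m rho *m v) ord0 ord0)
    & \tr rho = 1].

Definition observable (R : rcfType) (n : nat) (A : 'M[R[i]]_n) : Prop :=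
  hermitian A /\ A *m A = 1%:M.

Definition commute_mx (R : rcfType) (n : nat) (A B : 'M[R[i]]_n) : Prop :=
  A *m B = B *m A.

(* (1/2) tr(rho [A1(A2+A4) + A3(A2-A4)])  (real part; the trace is real
   under the commutation hypotheses) *)
Definition chsh_value (R : rcfType) (n : nat) (rho A1 A2 A3 A4 : 'M[R[i]]_n) : R :=
  complex.Re (\tr (rho *m (A1 *m (A2 + A4) + A3 *m (A2 - A4)))) / 2.

Definition C4 (R : realType) (rho : 'M[R[i]]_4) : R :=
  sup [set x : R | exists A1 A2 A3 A4 : 'M[R[i]]_4,
         [/\ [/\ observable A1, observable A2, observable A3 & observable A4],
             [/\ commute_mx A1 A2, commute_mx A1 A4,
                 commute_mx A3 A2 & commute_mx A3 A4]
           & x = chsh_value rho A1 A2 A3 A4]].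

(* Main.v *)
Require Import Defs.
From HB Require Import structures.
From mathcomp Require Import all_boot all_order all_algebra all_fingroup.
From mathcomp Require Import complex.
From mathcomp Require Import boolp classical_sets reals.
From mathcomp Require spectral sesquilinear.
From mathcomp Require Import ring lra.
From Stdlib Require Ncring Ncring_tac.
Set Implicit Arguments.
Unset Strict Implicit.
Unset Printing Implicit Defensive.
Import Order.TTheory GRing.Theory Num.Theory.
Local Open Scope ring_scope.


Section Infra.
Variable R : realType.
Local Notation C := (R[i]).

Lemma adjmxK n m (M : 'M[C]_(n,m)) : adjmx (adjmx M) = M.
Proof. by apply/matrixP=> i j; rewrite !mxE conjcK. Qed.

Lemma adjmxM n m p (A : 'M[C]_(n,m)) (B : 'M[C]_(m,p)) :
  adjmx (A *m B) = adjmx B *m adjmx A.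
Proof. by rewrite /adjmx trmx_mul map_mxM. Qed.

Lemma adjmxD n m (A B : 'M[C]_(n,m)) : adjmx (A + B) = adjmx A + adjmx B.
Proof. by apply/matrixP=> i j; rewrite !mxE rmorphD. Qed.

Lemma adjmxN n m (A : 'M[C]_(n,m)) : adjmx (- A) = - adjmx A.
Proof. by apply/matrixP=> i j; rewrite !mxE rmorphN. Qed.

Lemma adjmxB n m (A B : 'M[C]_(n,m)) : adjmx (A - B) = adjmx A - adjmx B.
Proof. by rewrite adjmxD adjmxN. Qed.

Lemma adjmxZ n m a (A : 'M[C]_(n,m)) : adjmx (a *: A) = conjc a *: adjmx A.
Proof. by apply/matrixP=> i j; rewrite !mxE rmorphM. Qed.

Lemma adjmx1 n : adjmx (1%:M : 'M[C]_n) = 1%:M.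
Proof. by apply/matrixP=> i j; rewrite !mxE eq_sym; case: eqP; rewrite ?conjc1 ?conjc0. Qed.

Lemma adjmx_scalar n a : adjmx (a%:M : 'M[C]_n) = (conjc a)%:M.
Proof. by apply/matrixP=> i j; rewrite !mxE eq_sym; case: eqP; rewrite ?mulr1n ?mulr0n ?conjc0. Qed.

Lemma adjmx_diag n (d : 'rV[C]_n) : adjmx (diag_mx d) = diag_mx (map_mx conjc d).
Proof. by apply/matrixP=> i j; rewrite !mxE eq_sym; case: eqP => [->|]; rewrite ?mulr1n ?mulr0n ?conjc0. Qed.

Lemma tr_adjmx n (A : 'M[C]_n) : \tr (adjmx A) = conjc (\tr A).
Proof. rewrite /mxtrace rmorph_sum; apply: eq_bigr => i _; by rewrite !mxE. Qed.

Definition unitary n (U : 'M[C]_n) := U *m adjmx U = 1%:M /\ adjmx U *m U = 1%:M.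

Definition cj n (U X : 'M[C]_n) := adjmx U *m X *m U.

Lemma cjM n (U X Y : 'M[C]_n) : unitary U -> cj U (X *m Y) = cj U X *m cj U Y.
Proof.
move=> [UU _]; rewrite /cj !mulmxA.
by rewrite -[(adjmx U *m X *m U) *m adjmx U]mulmxA UU mulmx1.
Qed.

Lemma cjD n (U X Y : 'M[C]_n) : cj U (X + Y) = cj U X + cj U Y.
Proof. by rewrite /cj mulmxDr mulmxDl. Qed.

Lemma cjN n (U X : 'M[C]_n) : cj U (- X) = - cj U X.
Proof. by rewrite /cj mulmxN mulNmx. Qed.

Lemma cjB n (U X Y : 'M[C]_n) : cj U (X - Y) = cj U X - cj U Y.
Proof. by rewrite cjD cjN. Qed.

Lemma cjZ n (U X : 'M[C]_n) a : cj U (a *: X) = a *: cj U X.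
Proof. by rewrite /cj -scalemxAr -scalemxAl. Qed.

Lemma cj1 n (U : 'M[C]_n) : unitary U -> cj U 1%:M = 1%:M.
Proof. by move=> [_ UU]; rewrite /cj mulmx1. Qed.

Lemma cj_scalar n (U : 'M[C]_n) a : unitary U -> cj U a%:M = a%:M.
Proof. by move=> uU; rewrite -scalemx1 cjZ cj1. Qed.

Lemma cj_adj n (U X : 'M[C]_n) : adjmx (cj U X) = cj U (adjmx X).
Proof. by rewrite /cj !adjmxM adjmxK mulmxA. Qed.

Lemma cj_tr n (U X : 'M[C]_n) : unitary U -> \tr (cj U X) = \tr X.
Proof. by move=> [UU _]; rewrite /cj mxtrace_mulC mulmxA UU mul1mx. Qed.

Lemma unitary_adj n (U : 'M[C]_n) : unitary U -> unitary (adjmx U).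
Proof. by move=> [h1 h2]; split; rewrite adjmxK. Qed.

Lemma cjK n (U X : 'M[C]_n) : unitary U -> cj (adjmx U) (cj U X) = X.
Proof. by move=> [h1 h2]; rewrite /cj adjmxK !mulmxA h1 mul1mx -mulmxA h1 mulmx1. Qed.

Lemma observable_cj n (U A : 'M[C]_n) : unitary U -> observable A -> observable (cj U A).
Proof.
move=> uU [hA sA]; split; first by rewrite /Defs.hermitian cj_adj hA.
by rewrite -cjM // sA cj1.
Qed.

Lemma commute_cj n (U A B : 'M[C]_n) : unitary U -> commute_mx A B -> commute_mx (cj U A) (cj U B).
Proof. by move=> uU h; rewrite /commute_mx -!cjM // h. Qed.

End Infra.

Module SpecAux.
Import spectral sesquilinear.
Section Spec.
Variable R : realType.
Local Notation C := (R[i]).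
Lemma herm_spectral n (A : 'M[C]_n) : Defs.hermitian A ->
  exists U : 'M[C]_n, exists d : 'I_n -> R,
    unitary U /\ cj U A = diag_mx (\row_i (d i)%:C%C).
Proof.
move=> hA.
have hA' : A \is hermsymmx.
  apply/is_hermitianmxP; rewrite expr0 scale1r; exact/esym.
have nA := hermitian_normalmx hA'.
have /orthomx_spectralP eA := nA.
have Pu := spectral_unitarymx A.
have real := hermitian_spectral_diag_real hA'.
set P := spectralmx A in eA Pu; set sp := spectral_diag A in eA real.
have PP : P *m adjmx P = 1%:M by apply/unitarymxP.
have uP : unitary (adjmx P).
  split; rewrite adjmxK //; exact: mulmx1C.
exists (adjmx P), (fun i => complex.Re (sp 0 i)); split => //.
rewrite /cj adjmxK eA invmx_unitary // -/(adjmx P) !mulmxA PP mul1mx.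
rewrite -mulmxA PP mulmx1; congr diag_mx.
apply/rowP => i; rewrite mxE.
have /mxOverP/(_ 0 i) := real.
by move=> /complex_realP [k ->].
Qed.

End Spec.
End SpecAux.
Notation herm_spectral := SpecAux.herm_spectral.


Section Sorted.
Variable R : realType.
Local Notation C := (R[i]).

Lemma char_poly_cj n (U A : 'M[C]_n) : unitary U -> char_poly (cj U A) = char_poly A.
Proof.
move=> [h1 h2]; rewrite /char_poly /char_poly_mx /cj.
set f := map_mx (@polyC C).
have -> : 'X%:M - f (adjmx U *m A *m U) = f (adjmx U) *m ('X%:M - f A) *m f U.
  rewrite /f !map_mxM mulmxBr mulmxBl; congr (_ - _).
  by rewrite scalar_mxC -mulmxA -map_mxM h2 map_mx1 mulmx1.
rewrite (det_mulmx (f (adjmx U) *m _)) det_mulmx mulrAC -det_mulmx.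
by rewrite /f -map_mxM h2 map_mx1 det1 mul1r.
Qed.

Definition permc n (W : 'M[C]_n) (s : 'S_n) : 'M[C]_n := \matrix_(i, j) W i (s j).

Lemma cj_permc n (W X : 'M[C]_n) (s : 'S_n) i j :
  cj (permc W s) X i j = cj W X (s i) (s j).
Proof.
rewrite /cj !mxE; apply: eq_bigr => l _; rewrite !mxE; congr (_ * _).
by apply: eq_bigr => k _; rewrite !mxE.
Qed.

Lemma unitary_permc n (W : 'M[C]_n) (s : 'S_n) : unitary W -> unitary (permc W s).
Proof.
move=> [h1 h2]; split; apply/matrixP => i j.
  rewrite -h1 !mxE [RHS](reindex_inj (@perm_inj _ s)) /=.
  by apply: eq_bigr => k _; rewrite !mxE.
have := congr1 (fun M : 'M[C]_n => M (s i) (s j)) h2.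
rewrite /= !mxE (inj_eq (@perm_inj _ s)) => <-.
by apply: eq_bigr => k _; rewrite !mxE.
Qed.

Definition pv (a b c d : R) (i : 'I_4) : R := nth 0 [:: a; b; c; d] i.
Definition Dg (f : 'I_4 -> R) : 'M[C]_4 := diag_mx (\row_i (f i)%:C%C).

Lemma rho_sorted (rho : 'M[C]_4) p1 p2 p3 p4 : Defs.hermitian rho ->
  char_poly rho = ('X - (p1%:C)%C%:P) * ('X - (p2%:C)%C%:P)
                  * ('X - (p3%:C)%C%:P) * ('X - (p4%:C)%C%:P) ->
  exists U, unitary U /\ cj U rho = Dg (pv p1 p2 p3 p4).
Proof.
move=> hr hc.
have [W [d [uW eW]]] := herm_spectral hr.
pose t := [tuple (d i)%:C%C | i < 4].
have cp : \prod_(x <- t) ('X - x%:P) =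
          \prod_(x <- [:: p1%:C; p2%:C; p3%:C; p4%:C]%C) ('X - x%:P).
  rewrite !big_cons big_nil mulr1 !mulrA -hc -(char_poly_cj rho uW) eW.
  rewrite char_poly_trig ?diag_mx_is_trig //.
  rewrite /t /=.
  rewrite big_map big_enum /=.
  by apply: eq_bigr => i _; rewrite !mxE eqxx mulr1n.
have /tuple_permP [s Hs] := prod_XsubC_eq (esym cp).
exists (permc W s); split; first exact: unitary_permc.
apply/matrixP => i j; rewrite cj_permc eW !mxE (inj_eq (@perm_inj _ s)).
congr (_ *+ _).
have E : nth 0 [:: p1%:C; p2%:C; p3%:C; p4%:C]%C i = (d (s i))%:C%C.
  by rewrite Hs -(tnth_nth 0 [tuple tnth t (s i) | i < 4] i) tnth_mktuple /t tnth_mktuple.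
rewrite -E /pv; by case: i {E} => [[|[|[|[|]]]] ?].
Qed.

End Sorted.


Module NCR.
Import Stdlib.setoid_ring.Ncring.
#[export] Instance T_ops (T : pzRingType) : @Ring_ops T 0%R 1%R (@GRing.add T) (@GRing.mul T) (fun x y => GRing.add x (GRing.opp y)) (@GRing.opp T) (@eq T) := {}.
#[export] Instance T_ring (T : pzRingType) : @Ring T 0%R 1%R (@GRing.add T) (@GRing.mul T) (fun x y => GRing.add x (GRing.opp y)) (@GRing.opp T) (@eq T) (T_ops T).
Proof.
constructor; try (by move=> *; exact: eq_refl); try exact: eq_equivalence;
  try (by move=> x y -> z w ->); try (by move=> x y ->).
- exact: add0r.
- exact: addrC.
- exact: addrA.
- exact: mul1r.
- exact: mulr1.
- exact: mulrA.
- exact: mulrDl.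
- move=> x y z; exact: mulrDr.
- by move=> x y; reflexivity.
- move=> x; exact: subrr.
Qed.
End NCR.
Import NCR.
Ltac non_commutative_ring := Stdlib.setoid_ring.Ncring_tac.non_commutative_ring.

Section S.
Variable T : pzRingType.

Variables a1 a2 a3 a4 : T.
Hypothesis s1 : a1 * a1 = 1.
Hypothesis s2 : a2 * a2 = 1.
Hypothesis s3 : a3 * a3 = 1.
Hypothesis s4 : a4 * a4 = 1.
Hypothesis c12 : a1 * a2 = a2 * a1.
Hypothesis c14 : a1 * a4 = a4 * a1.
Hypothesis c32 : a3 * a2 = a2 * a3.
Hypothesis c34 : a3 * a4 = a4 * a3.

Let kk := a1 * a3 - a3 * a1.
Let ll := a4 * a2 - a2 * a4.
Let bb := a1 * (a2 + a4) + a3 * (a2 - a4).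

Let z1 : a1 * a1 - 1 = 0. Proof. by rewrite s1 subrr. Qed.
Let z2 : a2 * a2 - 1 = 0. Proof. by rewrite s2 subrr. Qed.
Let z3 : a3 * a3 - 1 = 0. Proof. by rewrite s3 subrr. Qed.
Let z4 : a4 * a4 - 1 = 0. Proof. by rewrite s4 subrr. Qed.
Let d12 : a1 * a2 - a2 * a1 = 0. Proof. by rewrite c12 subrr. Qed.
Let d14 : a1 * a4 - a4 * a1 = 0. Proof. by rewrite c14 subrr. Qed.
Let d32 : a3 * a2 - a2 * a3 = 0. Proof. by rewrite c32 subrr. Qed.
Let d34 : a3 * a4 - a4 * a3 = 0. Proof. by rewrite c34 subrr. Qed.

Ltac zsimp := do 3 rewrite ?z1 ?z2 ?z3 ?z4 ?d12 ?d14 ?d32 ?d34 ?mul0r ?mulr0 ?addr0 ?add0r ?oppr0 ?subr0.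

Lemma nc_anti1k : a1 * kk = - (kk * a1).
Proof using s1 s2 s3 s4 c12 c14 c32 c34.
have -> : a1 * kk = - (kk * a1) + ((a1*a1 - 1)*a3 - a3*(a1*a1-1)).
  rewrite /kk; non_commutative_ring.
by zsimp.
Qed.

Lemma nc_anti3k : a3 * kk = - (kk * a3).
Proof using s1 s2 s3 s4 c12 c14 c32 c34.
have -> : a3 * kk = - (kk * a3) + (a1*(a3*a3-1) - (a3*a3-1)*a1).
  rewrite /kk; non_commutative_ring.
by zsimp.
Qed.

Lemma nc_comm_k2 : a2 * kk = kk * a2.
Proof using s1 s2 s3 s4 c12 c14 c32 c34.
have -> : a2 * kk = kk * a2 - (a1*a2 - a2*a1)*a3 - a1*(a3*a2 - a2*a3)
                    + (a3*a2 - a2*a3)*a1 + a3*(a1*a2 - a2*a1).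
  rewrite /kk; non_commutative_ring.
by zsimp.
Qed.

Lemma nc_comm_k4 : a4 * kk = kk * a4.
Proof using s1 s2 s3 s4 c12 c14 c32 c34.
have -> : a4 * kk = kk * a4 - (a1*a4 - a4*a1)*a3 - a1*(a3*a4 - a4*a3)
                    + (a3*a4 - a4*a3)*a1 + a3*(a1*a4 - a4*a1).
  rewrite /kk; non_commutative_ring.
by zsimp.
Qed.

Lemma nc_anti2l : a2 * ll = - (ll * a2).
Proof using s1 s2 s3 s4 c12 c14 c32 c34.
have -> : a2 * ll = - (ll * a2) + (- ((a2*a2 - 1)*a4) + a4*(a2*a2 - 1)).
  rewrite /ll; non_commutative_ring.
by zsimp.
Qed.

Lemma nc_comm_kl : kk * ll = ll * kk.
Proof using s1 s2 s3 s4 c12 c14 c32 c34.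
have e2 : a2 * kk - kk * a2 = 0 by rewrite nc_comm_k2 subrr.
have e4 : a4 * kk - kk * a4 = 0 by rewrite nc_comm_k4 subrr.
have -> : kk * ll = ll * kk - a4 * (a2 * kk - kk * a2) - (a4 * kk - kk * a4) * a2
                   + a2 * (a4 * kk - kk * a4) + (a2 * kk - kk * a2) * a4.
  rewrite /ll; non_commutative_ring.
by rewrite e2 e4; zsimp.
Qed.

Lemma nc_antikb : kk * bb = - (bb * kk).
Proof using s1 s2 s3 s4 c12 c14 c32 c34.
have e2 : a2 * kk - kk * a2 = 0 by rewrite nc_comm_k2 subrr.
have e4 : a4 * kk - kk * a4 = 0 by rewrite nc_comm_k4 subrr.
have f1 : a1 * kk + kk * a1 = 0 by rewrite nc_anti1k addNr.
have f3 : a3 * kk + kk * a3 = 0 by rewrite nc_anti3k addNr.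
have -> : kk * bb = - (bb * kk) + (a1 * kk + kk * a1) * (a2 + a4)
   + a1 * ((a2 * kk - kk * a2) + (a4 * kk - kk * a4))
   + (a3 * kk + kk * a3) * (a2 - a4)
   + a3 * ((a2 * kk - kk * a2) - (a4 * kk - kk * a4)).
  rewrite /bb; non_commutative_ring.
by rewrite e2 e4 f1 f3; zsimp.
Qed.

Lemma nc_bb2 : bb * bb = 1 + 1 + 1 + 1 + kk * ll.
Proof using s1 s2 s3 s4 c12 c14 c32 c34.
pose x := a2 + a4; pose y := a2 - a4.
have p1 : a1 * x - x * a1 = 0 by rewrite /x mulrDr mulrDl c12 c14 subrr.
have p3 : a3 * x - x * a3 = 0 by rewrite /x mulrDr mulrDl c32 c34 subrr.
have q1 : a1 * y - y * a1 = 0 by rewrite /y mulrBr mulrBl c12 c14 subrr.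
have q3 : a3 * y - y * a3 = 0 by rewrite /y mulrBr mulrBl c32 c34 subrr.
have -> : bb * bb = 1 + 1 + 1 + 1 + kk * ll
   + ((a1*a1 - 1) * (x * x) - a1 * (a1 * x - x * a1) * x
      + (a3*a3 - 1) * (y * y) - a3 * (a3 * y - y * a3) * y
      - a1 * (a3 * x - x * a3) * y - a3 * (a1 * y - y * a1) * x
      + (a2*a2 - 1) + (a2*a2 - 1) + (a4*a4 - 1) + (a4*a4 - 1)
      + (a1 * a3 + a3 * a1) * ((a2*a2 - 1) - (a4*a4 - 1))).
  rewrite /bb /kk /ll /x /y; non_commutative_ring.
by rewrite p1 p3 q1 q3; zsimp.
Qed.

Lemma nc_a2kla2 : a2 * (kk * ll) * a2 = - (kk * ll).
Proof using s1 s2 s3 s4 c12 c14 c32 c34.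
have e2 : a2 * kk - kk * a2 = 0 by rewrite nc_comm_k2 subrr.
have f2 : a2 * ll + ll * a2 = 0 by rewrite nc_anti2l addNr.
have -> : a2 * (kk * ll) * a2 = - (kk * ll) + (a2 * kk - kk * a2) * ll * a2
    + kk * (a2 * ll + ll * a2) * a2 - kk * ll * (a2 * a2 - 1).
  non_commutative_ring.
by rewrite e2 f2; zsimp.
Qed.

Lemma nc_bb_adj : (a2 + a4) * a1 + (a2 - a4) * a3 = bb.
Proof using s1 s2 s3 s4 c12 c14 c32 c34.
have -> : (a2 + a4) * a1 + (a2 - a4) * a3 = bb - (a1 * a2 - a2 * a1) - (a1 * a4 - a4 * a1)
   - (a3 * a2 - a2 * a3) + (a3 * a4 - a4 * a3).
  rewrite /bb; non_commutative_ring.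
by zsimp.
Qed.

End S.


Section Ineq.
Variable R : realType.
Local Notation C := (R[i]).
Local Notation Re := complex.Re.
Local Notation Im := complex.Im.

Definition nsq (z : C) : R := Re z ^+ 2 + Im z ^+ 2.

Lemma nsq_ge0 z : 0 <= nsq z.
Proof. by rewrite /nsq addr_ge0 // sqr_ge0. Qed.

Lemma Re_mulJ (z : C) : Re (z * conjc z) = nsq z.
Proof. by case: z => x y; rewrite /nsq /= mulrN opprK !expr2. Qed.

Lemma Re_realM (x : R) (z : C) : Re ((x%:C)%C * z) = x * Re z.
Proof. by case: z => u v; rewrite /= mul0r subr0. Qed.

Lemma ReD (z w : C) : Re (z + w) = Re z + Re w.
Proof. by case: z; case: w. Qed.

Lemma ReN (z : C) : Re (- z) = - Re z.
Proof. by case: z. Qed.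

Lemma ReB (z w : C) : Re (z - w) = Re z - Re w.
Proof. by rewrite ReD ReN. Qed.

Lemma Re_sum (I : Type) (r : seq I) (P : pred I) (F : I -> C) :
  Re (\sum_(i <- r | P i) F i) = \sum_(i <- r | P i) Re (F i).
Proof. by apply: (big_morph _ ReD). Qed.

Lemma Re_nat n : Re (n%:R : C) = n%:R.
Proof. by elim: n => // n IH; rewrite -addn1 !natrD ReD IH. Qed.

Lemma nsq_conj z : nsq (conjc z) = nsq z.
Proof. by case: z => x y; rewrite /nsq /= sqrrN. Qed.

Lemma le_Re_nsq z : Re z ^+ 2 <= nsq z.
Proof. by rewrite /nsq lerDl sqr_ge0. Qed.

Lemma herm_entry n (M : 'M[C]_n) i j : Defs.hermitian M -> M j i = conjc (M i j).
Proof. by move=> hM; rewrite -{1}hM !mxE. Qed.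

Lemma herm_sq_diag n (M : 'M[C]_n) i : Defs.hermitian M ->
  Re ((M *m M) i i) = \sum_j nsq (M i j).
Proof.
move=> hM; rewrite mxE Re_sum; apply: eq_bigr => j _.
by rewrite (herm_entry i j hM) Re_mulJ.
Qed.

Lemma tr_diagM n (d : 'I_n -> R) (M : 'M[C]_n) :
  \tr (diag_mx (\row_i (d i)%:C%C) *m M) = \sum_i (d i)%:C%C * M i i.
Proof. by rewrite /mxtrace; apply: eq_bigr => i _; rewrite mul_diag_mx !mxE. Qed.

Lemma sum4 (F : 'I_4 -> C) : \sum_i F i = F 0 + F 1 + F 2%:R + F 3%:R.
Proof.
rewrite !big_ord_recr big_ord0 /= add0r.
by congr (_ + _ + _ + _); congr F; apply: val_inj.
Qed.

Lemma sum4R (F : 'I_4 -> R) : \sum_i F i = F 0 + F 1 + F 2%:R + F 3%:R.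
Proof.
rewrite !big_ord_recr big_ord0 /= add0r.
by congr (_ + _ + _ + _); congr F; apply: val_inj.
Qed.

Lemma pv0 (a b c d : R) : pv a b c d 0 = a. Proof. by []. Qed.
Lemma pv1 (a b c d : R) : pv a b c d 1 = b. Proof. by []. Qed.
Lemma pv2 (a b c d : R) : pv a b c d 2%:R = c. Proof. by []. Qed.
Lemma pv3 (a b c d : R) : pv a b c d 3%:R = d. Proof. by []. Qed.

Lemma bound_classical a b c d (B : 'M[C]_4) :
  0 <= a -> 0 <= b -> 0 <= c -> 0 <= d -> a + b + c + d = 1 ->
  Defs.hermitian B -> B *m B = 4%:R%:M ->
  Re (\tr (Dg (pv a b c d) *m B)) <= 2.
Proof.
move=> ha hb hc hd hs hB hBB.
have key i : Re (B i i) <= 2.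
  have h := herm_sq_diag i hB; rewrite hBB mxE eqxx mulr1n Re_nat in h.
  have h2 : nsq (B i i) <= 4%:R.
    rewrite h (bigD1 i) //= lerDl sumr_ge0 // => j _; exact: nsq_ge0.
  have := le_Re_nsq (B i i); move: h2; set x := Re (B i i); set y := nsq _.
  move=> h2 h3; nra.
rewrite /Dg tr_diagM sum4 !ReD !Re_realM pv0 pv1 pv2 pv3.
have := key 0; have := key 1; have := key 2%:R; have := key 3%:R; nra.
Qed.

Lemma rearr (p0 p1 p2 p3 t00 t01 t02 t03 t10 t11 t12 t13 t20 t21 t22 t23 t30 t31 t32 t33 : R) :
  p1 <= p0 -> p2 <= p1 -> p3 <= p2 ->
  0 <= t00 -> 0 <= t01 -> 0 <= t02 -> 0 <= t10 -> 0 <= t11 -> 0 <= t20 ->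
  0 <= t23 -> 0 <= t32 -> 0 <= t33 ->
  t00 + t01 + t02 + t03 = 1 -> t10 + t11 + t12 + t13 = 1 ->
  t20 + t21 + t22 + t23 = 1 -> t30 + t31 + t32 + t33 = 1 ->
  t00 + t10 + t20 + t30 = 1 -> t01 + t11 + t21 + t31 = 1 ->
  t02 + t12 + t22 + t32 = 1 -> t03 + t13 + t23 + t33 = 1 ->
  2 * (p0 * p3 + p1 * p2) <=
  p0 * (p0 * t00 + p1 * t01 + p2 * t02 + p3 * t03) +
  p1 * (p0 * t10 + p1 * t11 + p2 * t12 + p3 * t13) +
  p2 * (p0 * t20 + p1 * t21 + p2 * t22 + p3 * t23) +
  p3 * (p0 * t30 + p1 * t31 + p2 * t32 + p3 * t33).
Proof.
move=> h01 h12 h23 g00 g01 g02 g10 g11 g20 g23 g32 g33 r0 r1 r2 r3 c0 c1 c2 c3.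
set a0 := p0 - p1; set a1 := p1 - p2; set a2 := p2 - p3.
have ha0 : 0 <= a0 by rewrite subr_ge0.
have ha1 : 0 <= a1 by rewrite subr_ge0.
have ha2 : 0 <= a2 by rewrite subr_ge0.
rewrite -subr_ge0.
have -> : p0 * (p0 * t00 + p1 * t01 + p2 * t02 + p3 * t03) +
  p1 * (p0 * t10 + p1 * t11 + p2 * t12 + p3 * t13) +
  p2 * (p0 * t20 + p1 * t21 + p2 * t22 + p3 * t23) +
  p3 * (p0 * t30 + p1 * t31 + p2 * t32 + p3 * t33) - 2 * (p0 * p3 + p1 * p2) =
  a0*a0*t00 + a0*a1*(t00+t01) + a0*a2*(t00+t01+t02) + a1*a0*(t00+t10)
  + a1*a1*(t00+t01+t10+t11) + a1*a2*(t23+t33) + a2*a0*(t00+t10+t20)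
  + a2*a1*(t32+t33) + a2*a2*t33.
  have e03 : t03 = 1 - t00 - t01 - t02 by rewrite -r0; ring.
  have e13 : t13 = 1 - t10 - t11 - t12 by rewrite -r1; ring.
  have e23 : t23 = 1 - t20 - t21 - t22 by rewrite -r2; ring.
  have e30 : t30 = 1 - t00 - t10 - t20 by rewrite -c0; ring.
  have e31 : t31 = 1 - t01 - t11 - t21 by rewrite -c1; ring.
  have e32 : t32 = 1 - t02 - t12 - t22 by rewrite -c2; ring.
  have e33 : t33 = 1 - t30 - t31 - t32 by rewrite -r3; ring.
  rewrite e33 e30 e31 e32 e03 e13 e23 /a0 /a1 /a2; ring.
clearbody a0 a1 a2.
by repeat (apply: addr_ge0 || apply: mulr_ge0).
Qed.

Lemma discr (al be ga : R) : 0 <= al ->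
  (forall t : R, 0 <= t ^+ 2 * al - 2 * t * be + ga) -> be ^+ 2 <= al * ga.
Proof.
move=> hal ht.
have [al0|alp] := eqVneq al 0.
  have [be0|bep] := eqVneq be 0; first by rewrite be0 al0 expr0n /= mul0r.
  have := ht ((ga + 1) / (2 * be)); rewrite al0 mulr0 add0r.
  have -> : 2 * ((ga + 1) / (2 * be)) * be = ga + 1.
    by field; rewrite bep.
  lra.
have hal' : 0 < al by rewrite lt_def alp hal.
have := ht (be / al).
have -> : (be / al) ^+ 2 * al - 2 * (be / al) * be + ga = ga - be ^+ 2 / al.
  by field.
rewrite subr_ge0 ler_pdivrMr // => h; by rewrite mulrC.
Qed.

Lemma Dg_herm (p : 'I_4 -> R) : Defs.hermitian (Dg p).
Proof.
rewrite /Defs.hermitian /Dg adjmx_diag; congr diag_mx.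
by apply/rowP => i; rewrite !mxE conjc_real.
Qed.

Lemma tr_herm_sq_ge0 (Y : 'M[C]_4) : Defs.hermitian Y -> 0 <= Re (\tr (Y *m Y)).
Proof.
move=> hY; rewrite /mxtrace Re_sum; apply: sumr_ge0 => i _.
rewrite herm_sq_diag //; apply: sumr_ge0 => j _; exact: nsq_ge0.
Qed.

Lemma adjmx_herm_lin (t : R) (X B : 'M[C]_4) : Defs.hermitian X -> Defs.hermitian B ->
  Defs.hermitian ((t%:C)%C *: X - B).
Proof.
by move=> hX hB; rewrite /Defs.hermitian adjmxB adjmxZ hX hB conjc_real.
Qed.

Lemma bound_quantum (a b c d : R) (B S : 'M[C]_4) :
  d <= c -> c <= b -> b <= a ->
  Defs.hermitian B -> Defs.hermitian S -> S *m S = 1%:M -> S *m B = - (B *m S) ->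
  Re (\tr (B *m B)) = 16%:R ->
  Re (\tr (Dg (pv a b c d) *m B)) / 2 <= Num.sqrt (2 * ((a - d) ^+ 2 + (b - c) ^+ 2)).
Proof.
move=> hdc hcb hba hB hS hSS hSB hBB.
set D := Dg (pv a b c d).
have hD : Defs.hermitian D by exact: Dg_herm.
have tSDSB : \tr (S *m D *m S *m B) = - \tr (D *m B).
  rewrite -mulmxA mxtrace_mulC hSB mulNmx -mulmxA (mulmxA S S D) hSS mul1mx.
  by rewrite raddfN /= mxtrace_mulC.
set X := D - S *m D *m S.
have hX : Defs.hermitian X.
  by rewrite /Defs.hermitian /X adjmxB !adjmxM hD hS mulmxA.
have tXB : \tr (X *m B) = \tr (D *m B) + \tr (D *m B).
  by rewrite /X mulmxBl raddfB /= tSDSB opprK.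
have tXX : \tr (X *m X) = \tr (D *m D) + \tr (D *m D) - (\tr (D *m (S *m D *m S)) + \tr (D *m (S *m D *m S))).
  rewrite /X mulmxBl !mulmxBr !raddfB /=.
  have -> : \tr (S *m D *m S *m (S *m D *m S)) = \tr (D *m D).
    rewrite !mulmxA -(mulmxA _ S S) hSS mulmx1 -mulmxA mxtrace_mulC.
    by rewrite -mulmxA (mulmxA S S) hSS mul1mx.
  rewrite [\tr (S *m D *m S *m D)]mxtrace_mulC.
  ring.
clearbody X.
have tYY t : Re (\tr (((t%:C)%C *: X - B) *m ((t%:C)%C *: X - B))) =
    t ^+ 2 * Re (\tr (X *m X)) - 2 * t * Re (\tr (X *m B)) + Re (\tr (B *m B)).
  rewrite mulmxBl !mulmxBr !raddfB /= -!scalemxAl -!scalemxAr !mxtraceZ.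
  rewrite (mxtrace_mulC B X) !Re_realM; ring.
have hal : 0 <= Re (\tr (X *m X)) by exact: tr_herm_sq_ge0.
have hnn t : 0 <= t ^+ 2 * Re (\tr (X *m X)) - 2 * t * Re (\tr (X *m B)) + Re (\tr (B *m B)).
  by rewrite -tYY; apply: tr_herm_sq_ge0; exact: adjmx_herm_lin.
have hdis := discr hal hnn.
set r := Re (\tr (D *m B)) in hdis *.
rewrite tXB ReD tXX !ReB !ReD hBB -/r in hdis.
have eDD : Re (\tr (D *m D)) = a ^+ 2 + b ^+ 2 + c ^+ 2 + d ^+ 2.
  rewrite /D /Dg tr_diagM sum4 !ReD !Re_realM !mxE !eqxx !mulr1n /= pv0 pv1 pv2 pv3.
  by rewrite !expr2.
pose T i j := nsq (S i j).
have eSDS i : Re ((S *m D *m S) i i) = \sum_j pv a b c d j * T i j.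
  rewrite mxE Re_sum; apply: eq_bigr => j _.
  rewrite /D /Dg mul_mx_diag mxE mxE (herm_entry i j hS).
  by rewrite mulrAC mulrC Re_realM Re_mulJ.
have eDSDS : Re (\tr (D *m (S *m D *m S))) = \sum_i pv a b c d i * \sum_j pv a b c d j * T i j.
  rewrite /D tr_diagM Re_sum; apply: eq_bigr => i _.
  by rewrite Re_realM -/D eSDS.
have rowT i : \sum_j T i j = 1.
  by rewrite -herm_sq_diag // hSS mxE eqxx mulr1n.
have colT j : \sum_i T i j = 1.
  rewrite -(rowT j); apply: eq_bigr => i _.
  by rewrite /T (herm_entry i j hS) nsq_conj.
have T0 i j : 0 <= T i j by exact: nsq_ge0.
have hre : 2 * (a * d + b * c) <= Re (\tr (D *m (S *m D *m S))).
  rewrite eDSDS sum4R !sum4R pv0 pv1 pv2 pv3.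
  move: (rowT 0) (rowT 1) (rowT 2%:R) (rowT 3%:R) (colT 0) (colT 1) (colT 2%:R) (colT 3%:R).
  rewrite !sum4R => r0 r1 r2 r3 c0 c1 c2 c3.
  by apply: rearr.
rewrite eDD in hdis.
have hq : (r / 2) ^+ 2 <= 2 * ((a - d) ^+ 2 + (b - c) ^+ 2).
  set Z := Re (\tr (D *m (S *m D *m S))) in hre hdis.
  nra.
have hq0 : 0 <= 2 * ((a - d) ^+ 2 + (b - c) ^+ 2).
  by rewrite mulr_ge0 // addr_ge0 // sqr_ge0.
apply: (le_trans (ler_norm _)).
by rewrite -sqrtr_sqr ler_sqrt.
Qed.

End Ineq.


Section Comb.
Variable R : realType.

Lemma ord4_cases (x : 'I_4) : [\/ x = 0, x = 1, x = 2%:R | x = 3%:R].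
Proof.
case: x => [[|[|[|[|//]]]] H].
- by apply: Or41; apply: val_inj.
- by apply: Or42; apply: val_inj.
- by apply: Or43; apply: val_inj.
- by apply: Or44; apply: val_inj.
Qed.

Lemma sum4_distinct (f : 'I_4 -> R) i j k l : uniq [:: i; j; k; l] ->
  \sum_x f x = f i + f j + f k + f l.
Proof.
rewrite sum4R.
by case: (ord4_cases i) => ->; case: (ord4_cases j) => ->;
   case: (ord4_cases k) => ->; case: (ord4_cases l) => -> //= _; ring.
Qed.

Lemma mult1 (h : 'I_4 -> R) : (exists k, h k = 0) -> \sum_x h x = 0 ->
  (forall i, exists j, h j = - h i) ->
  forall i j, h i != 0 -> j != i -> h j != h i.
Proof.
move=> [k hk] hs hex i j hi ji; apply/negP => /eqP hji.
have [l hl] := hex i.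
have ki : k != i by apply/negP => /eqP ki; move: hi; rewrite -ki hk eqxx.
have kj : k != j by apply/negP => /eqP kj; move: hi; rewrite -hji -kj hk eqxx.
have ai : - h i != h i.
  apply/negP => /eqP e; move: hi; have -> : h i = 0 by lra.
  by rewrite eqxx.
have li : l != i by apply/negP => /eqP li; move: ai; rewrite -hl li eqxx.
have lj : l != j by apply/negP => /eqP lj; move: ai; rewrite -hl lj hji eqxx.
have lk : l != k.
  apply/negP => /eqP lk; move: hi; have -> : h i = 0 by move: hl; rewrite lk hk; lra.
  by rewrite eqxx.
have u : uniq [:: i; j; k; l].
  by rewrite /= !inE !negb_or eq_sym ji /= eq_sym ki eq_sym li eq_sym kj eq_sym lj eq_sym lk.
move: hs; rewrite (sum4_distinct h u) hk hl hji => e.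
have e0 : h i = 0 by lra.
by move: hi; rewrite e0 eqxx.
Qed.

End Comb.


Section Struct.
Variable R : realType.
Local Notation C := (R[i]).
Local Notation M := ('M[C]_4).

Lemma conj_i : conjc ('i%C : C) = - 'i%C.
Proof. by apply/eqP; rewrite eq_complex /= oppr0 !eqxx. Qed.

Lemma i_neq0 : ('i%C : C) != 0.
Proof. by rewrite eq_complex /= oner_eq0 andbF. Qed.

Lemma realC_eq0 (x : R) : (((x%:C)%C : C) == 0) = (x == 0).
Proof. by rewrite eq_complex /= eqxx andbT. Qed.

Lemma realCD (x y : R) : ((x + y)%:C)%C = (x%:C + y%:C)%C :> C.
Proof. by rewrite rmorphD. Qed.

Lemma realCN (x : R) : ((- x)%:C)%C = - (x%:C)%C :> C.
Proof. by rewrite rmorphN. Qed.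

Lemma diagE (d : 'I_4 -> R) (Y : M) i j :
  (diag_mx (\row_k (d k)%:C%C) *m Y) i j = (d i)%:C%C * Y i j.
Proof. by rewrite mul_diag_mx !mxE. Qed.

Lemma diagEr (d : 'I_4 -> R) (Y : M) i j :
  (Y *m diag_mx (\row_k (d k)%:C%C)) i j = Y i j * (d j)%:C%C.
Proof. by rewrite mul_mx_diag !mxE. Qed.

Lemma oppmxE (Y : M) i j : (- Y) i j = - Y i j.
Proof. by rewrite mxE. Qed.

Lemma diag_anti (h : 'I_4 -> R) (Y : M) :
  diag_mx (\row_i (h i)%:C%C) *m Y = - (Y *m diag_mx (\row_i (h i)%:C%C)) ->
  forall i j, h i + h j != 0 -> Y i j = 0.
Proof.
move=> e i j nz; have := congr1 (fun X : M => X i j) e.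
rewrite mul_diag_mx mul_mx_diag !mxE => e2.
have : ((h i + h j)%:C)%C * Y i j = 0.
  by rewrite realCD mulrDl e2 mulrC addNr.
by move/eqP; rewrite mulf_eq0 realC_eq0 (negbTE nz) /= => /eqP.
Qed.

Lemma diag_comm (h : 'I_4 -> R) (Y : M) :
  diag_mx (\row_i (h i)%:C%C) *m Y = Y *m diag_mx (\row_i (h i)%:C%C) ->
  forall i j, h i - h j != 0 -> Y i j = 0.
Proof.
move=> e i j nz; have := congr1 (fun X : M => X i j) e.
rewrite mul_diag_mx mul_mx_diag !mxE => e2.
have : ((h i - h j)%:C)%C * Y i j = 0.
  by rewrite realCD realCN mulrDl e2 mulNr mulrC subrr.
by move/eqP; rewrite mulf_eq0 realC_eq0 (negbTE nz) /= => /eqP.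
Qed.

Variables A1 A2 A3 A4 : M.
Hypothesis o1 : observable A1.
Hypothesis o2 : observable A2.
Hypothesis o3 : observable A3.
Hypothesis o4 : observable A4.
Hypothesis c12 : commute_mx A1 A2.
Hypothesis c14 : commute_mx A1 A4.
Hypothesis c32 : commute_mx A3 A2.
Hypothesis c34 : commute_mx A3 A4.

Let s1 : A1 *m A1 = 1%:M := o1.2.
Let s2 : A2 *m A2 = 1%:M := o2.2.
Let s3 : A3 *m A3 = 1%:M := o3.2.
Let s4 : A4 *m A4 = 1%:M := o4.2.

Definition Km := A1 *m A3 - A3 *m A1.
Definition Lm := A4 *m A2 - A2 *m A4.
Definition Bm := A1 *m (A2 + A4) + A3 *m (A2 - A4).

Lemma mB2 : Bm *m Bm = 1%:M + 1%:M + 1%:M + 1%:M + Km *m Lm.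
Proof. exact: (@nc_bb2 M _ _ _ _ s1 s2 s3 s4 c12 c14 c32 c34). Qed.

Lemma mKB : Km *m Bm = - (Bm *m Km).
Proof. exact: (@nc_antikb M _ _ _ _ s1 s2 s3 s4 c12 c14 c32 c34). Qed.

Lemma mKL : Km *m Lm = Lm *m Km.
Proof. exact: (@nc_comm_kl M _ _ _ _ s1 s2 s3 s4 c12 c14 c32 c34). Qed.

Lemma mA1K : A1 *m Km = - (Km *m A1).
Proof. exact: (@nc_anti1k M _ _ _ _ s1 s2 s3 s4 c12 c14 c32 c34). Qed.

Lemma mA2K : A2 *m Km = Km *m A2.
Proof. exact: (@nc_comm_k2 M _ _ _ _ s1 s2 s3 s4 c12 c14 c32 c34). Qed.

Lemma mA2L : A2 *m Lm = - (Lm *m A2).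
Proof. exact: (@nc_anti2l M _ _ _ _ s1 s2 s3 s4 c12 c14 c32 c34). Qed.

Lemma mA2KL : A2 *m (Km *m Lm) *m A2 = - (Km *m Lm).
Proof. exact: (@nc_a2kla2 M _ _ _ _ s1 s2 s3 s4 c12 c14 c32 c34). Qed.

Lemma mBadj : (A2 + A4) *m A1 + (A2 - A4) *m A3 = Bm.
Proof. exact: (@nc_bb_adj M _ _ _ _ s1 s2 s3 s4 c12 c14 c32 c34). Qed.

Lemma Bm_herm : Defs.hermitian Bm.
Proof.
rewrite /Defs.hermitian {1}/Bm adjmxD !adjmxM adjmxD adjmxB.
by rewrite o1.1 o2.1 o3.1 o4.1 mBadj.
Qed.

Lemma trKL : \tr (Km *m Lm) = 0.
Proof.
have e : \tr (Km *m Lm) = - \tr (Km *m Lm).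
  by rewrite -raddfN /= -mA2KL [RHS]mxtrace_mulC (mulmxA A2 A2) s2 mul1mx.
by apply/eqP; rewrite -eqNr -e.
Qed.

Lemma trBB : complex.Re (\tr (Bm *m Bm)) = 16%:R.
Proof.
rewrite mB2 !mxtraceD trKL addr0 mxtrace1 !ReD.
have r1 : complex.Re (1 : C) = 1 by [].
rewrite r1; lra.
Qed.

Lemma struct_case : Km *m Lm = 0 \/
  exists S : M, [/\ Defs.hermitian S, S *m S = 1%:M & S *m Bm = - (Bm *m S)].
Proof.
pose H := 'i%C *: Km.
have hK : adjmx Km = - Km by rewrite /Km adjmxB !adjmxM o1.1 o3.1 opprB.
have hH : Defs.hermitian H.
  by rewrite /Defs.hermitian /H adjmxZ hK conj_i scalerN scaleNr opprK.
have [W [h [uW eW]]] := herm_spectral hH.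
set Dh := diag_mx _ in eW.
have uW' := unitary_adj uW.
have HB : H *m Bm = - (Bm *m H) by rewrite /H -scalemxAl -scalemxAr mKB scalerN.
have DB : Dh *m cj W Bm = - (cj W Bm *m Dh) by rewrite -eW -!cjM // HB cjN.
case: (boolP [exists k, h k == 0]) => [/existsP [k /eqP hk] | /existsPn nz].
- left.
  set a1 := cj W A1; set a2 := cj W A2; set L' := cj W Lm.
  have a1a1 : a1 *m a1 = 1%:M by rewrite -cjM // s1 cj1.
  have a2a2 : a2 *m a2 = 1%:M by rewrite -cjM // s2 cj1.
  have HA1 : H *m A1 = - (A1 *m H).
    by rewrite /H -scalemxAl -scalemxAr mA1K scalerN opprK.
  have DA1 : Dh *m a1 = - (a1 *m Dh) by rewrite -eW -!cjM // HA1 cjN.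
  have HA2 : H *m A2 = A2 *m H by rewrite /H -scalemxAl -scalemxAr mA2K.
  have DA2 : Dh *m a2 = a2 *m Dh by rewrite -eW -!cjM // HA2.
  have HL : H *m Lm = Lm *m H by rewrite /H -scalemxAl -scalemxAr mKL.
  have DL : Dh *m L' = L' *m Dh by rewrite -eW -!cjM // HL.
  have A2L : a2 *m L' = - (L' *m a2) by rewrite -!cjM // mA2L cjN.
  have hsum : \sum_i h i = 0.
    have : \tr Dh = 0.
      rewrite -eW cj_tr // /H mxtraceZ /Km raddfB /= mxtrace_mulC subrr mulr0 //.
    rewrite /Dh mxtrace_diag.
    under eq_bigr do rewrite mxE.
    by rewrite -rmorph_sum => /eqP; rewrite realC_eq0 => /eqP.
  have hex i : exists j, h j = - h i.
    case: (boolP [exists j, h j == - h i]) => [/existsP [j /eqP e]|/existsPn hn].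
      by exists j.
    have := congr1 (fun X : M => X i i) a1a1.
    rewrite !mxE eqxx big1 => [/eqP|j _]; first by rewrite eq_sym oner_eq0.
    rewrite (diag_anti DA1) ?mul0r //.
    by apply: contra (hn j) => /eqP e; apply/eqP; lra.
  have m1 := mult1 (ex_intro _ k hk) hsum hex.
  have Lrow i j : h i != 0 -> L' i j = 0.
    move=> hi; case: (eqVneq j i) => [->|ji]; last first.
      apply: (diag_comm DL); rewrite subr_eq0 eq_sym; exact: m1.
    have a2r l : l != i -> a2 i l = 0.
      move=> li; apply: (diag_comm DA2); rewrite subr_eq0 eq_sym; exact: m1.
    have a2c l : l != i -> a2 l i = 0.
      move=> li; apply: (diag_comm DA2); rewrite subr_eq0; exact: m1.
    have Lr l : l != i -> L' i l = 0.
      move=> li; apply: (diag_comm DL); rewrite subr_eq0 eq_sym; exact: m1.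
    have Lc l : l != i -> L' l i = 0.
      move=> li; apply: (diag_comm DL); rewrite subr_eq0; exact: m1.
    have e1 : (a2 *m a2) i i = a2 i i * a2 i i.
      rewrite mxE (bigD1 i) //= big1 ?addr0 // => l li; by rewrite a2r ?mul0r.
    have e2 : (a2 *m L') i i = a2 i i * L' i i.
      rewrite mxE (bigD1 i) //= big1 ?addr0 // => l li; by rewrite a2r ?mul0r.
    have e3 : (L' *m a2) i i = L' i i * a2 i i.
      rewrite mxE (bigD1 i) //= big1 ?addr0 // => l li; by rewrite Lr ?mul0r.
    have f1 : a2 i i * a2 i i = 1 by rewrite -e1 a2a2 mxE eqxx.
    have f2 : a2 i i * L' i i = - (L' i i * a2 i i).
      by rewrite -e2 -e3 A2L mxE.
    have : (a2 i i * L' i i) *+ 2 = 0 by rewrite mulr2n {2}f2 mulrC subrr.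
    move/eqP; rewrite mulrn_eq0 /= mulf_eq0 => /orP [/eqP a0|/eqP //].
    by move: f1; rewrite a0 mul0r => /eqP; rewrite eq_sym oner_eq0.
  have DL0 : Dh *m L' = 0.
    apply/matrixP => i j; rewrite diagE [RHS]mxE.
    have [->|hi] := eqVneq (h i) 0; first by rewrite mul0r.
    by rewrite Lrow // mulr0.
  have HL0 : H *m Lm = 0.
    rewrite -[H *m Lm](cjK _ uW) cjM // eW -/Dh -/L' DL0.
    by rewrite /cj mulmx0 mul0mx.
  move: HL0; rewrite /H -scalemxAl => /eqP; rewrite scaler_eq0 (negbTE i_neq0) /=.
  by move/eqP.
- right.
  pose sg i : R := if 0 < h i then 1 else -1.
  pose S' := Dg sg.
  have S'S' : S' *m S' = 1%:M.
    apply/matrixP => i j; rewrite /S' /Dg mul_diag_mx !mxE.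
    case: eqP => _; rewrite ?mulr0n ?mulr1n ?mulr0 //.
    by rewrite -rmorphM /sg; case: ifP => _; rewrite ?mulr1 ?mulrNN ?mulr1.
  have S'B : S' *m cj W Bm = - (cj W Bm *m S').
    apply/matrixP => i j; rewrite /S' /Dg diagE oppmxE diagEr.
    have [->|nzb] := eqVneq (cj W Bm i j) 0; first by rewrite mulr0 mul0r oppr0.
    have hij : h i + h j = 0.
      apply/eqP; apply: contraR nzb => nz'; apply/eqP; exact: (diag_anti DB).
    have -> : sg j = - sg i.
      have hj : h j = - h i by lra.
      have hi := nz i.
      rewrite /sg hj oppr_gt0.
      case: (boolP (0 < h i)) => hp.
        by rewrite ltNge (ltW hp).
      have hn : h i < 0 by rewrite lt_neqAle hi /=; rewrite -leNgt in hp.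
      by rewrite hn opprK.
    by rewrite realCN mulrN opprK mulrC.
  exists (cj (adjmx W) S'); split.
  + by rewrite /Defs.hermitian cj_adj Dg_herm.
  + by rewrite -cjM // S'S' cj1.
  + by rewrite -[Bm](cjK _ uW) -!cjM // S'B cjN.
Qed.

End Struct.


Section Constr.
Variable R : realType.
Local Notation C := (R[i]).
Local Notation M := ('M[C]_4).

Definition o0 : 'I_4 := @Ordinal 4 0 isT.
Definition o1 : 'I_4 := @Ordinal 4 1 isT.
Definition o2 : 'I_4 := @Ordinal 4 2 isT.
Definition o3 : 'I_4 := @Ordinal 4 3 isT.

Lemma sum4o (F : 'I_4 -> C) : \sum_i F i = F o0 + F o1 + F o2 + F o3.
Proof.
rewrite !big_ord_recr big_ord0 /= add0r.
by congr (_ + _ + _ + _); congr F; apply: val_inj.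
Qed.

Lemma ord4c (x : 'I_4) : [\/ x = o0, x = o1, x = o2 | x = o3].
Proof.
case: x => [[|[|[|[|//]]]] H].
- by apply: Or41; apply: val_inj.
- by apply: Or42; apply: val_inj.
- by apply: Or43; apply: val_inj.
- by apply: Or44; apply: val_inj.
Qed.

Definition mx4 (l : seq (seq C)) : M := \matrix_(i, j) nth 0 (nth [::] l i) j.

Ltac bf := apply/matrixP; move=> [[|[|[|[|//]]]] Hi] [[|[|[|[|//]]]] Hj];
  rewrite ?mxE ?sum4o ?mxE /=; ring.

Variables x y : R.
Let cx : C := (x%:C)%C.
Let sy : C := (y%:C)%C.

Definition A1c : M := mx4 [:: [:: 0; 1; 0; 0]; [:: 1; 0; 0; 0]; [:: 0; 0; 0; 1]; [:: 0; 0; 1; 0]].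
Definition A3c : M := mx4 [:: [:: 0; 0; 1; 0]; [:: 0; 0; 0; -1]; [:: 1; 0; 0; 0]; [:: 0; -1; 0; 0]].
Definition A2c : M := mx4 [:: [:: 0; cx; sy; 0]; [:: cx; 0; 0; sy]; [:: sy; 0; 0; - cx]; [:: 0; sy; - cx; 0]].
Definition A4c : M := mx4 [:: [:: 0; cx; - sy; 0]; [:: cx; 0; 0; - sy]; [:: - sy; 0; 0; - cx]; [:: 0; - sy; - cx; 0]].

Lemma A1c2 : A1c *m A1c = 1%:M. Proof. bf. Qed.
Lemma A3c2 : A3c *m A3c = 1%:M. Proof. bf. Qed.
Lemma A2c2 : A2c *m A2c = (cx * cx + sy * sy)%:M. Proof. bf. Qed.
Lemma A4c2 : A4c *m A4c = (cx * cx + sy * sy)%:M. Proof. bf. Qed.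
Lemma c12c : A1c *m A2c = A2c *m A1c. Proof. bf. Qed.
Lemma c14c : A1c *m A4c = A4c *m A1c. Proof. bf. Qed.
Lemma c32c : A3c *m A2c = A2c *m A3c. Proof. bf. Qed.
Lemma c34c : A3c *m A4c = A4c *m A3c. Proof. bf. Qed.

Ltac bfh := apply/matrixP; move=> [[|[|[|[|//]]]] Hi] [[|[|[|[|//]]]] Hj];
  rewrite !mxE /cx /sy /=; apply/eqP; rewrite eq_complex /= ?oppr0 ?opprK ?eqxx //.

Lemma A1c_h : Defs.hermitian A1c. Proof. bfh. Qed.
Lemma A3c_h : Defs.hermitian A3c. Proof. bfh. Qed.
Lemma A2c_h : Defs.hermitian A2c. Proof. bfh. Qed.
Lemma A4c_h : Defs.hermitian A4c. Proof. bfh. Qed.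

Lemma Bc_diag : A1c *m (A2c + A4c) + A3c *m (A2c - A4c) =
  Dg (pv (2 * (x + y)) (2 * (x - y)) (- (2 * (x - y))) (- (2 * (x + y)))).
Proof.
apply/matrixP; move=> [[|[|[|[|//]]]] Hi] [[|[|[|[|//]]]] Hj];
  rewrite !mxE ?sum4o !mxE /= /cx /sy ?rmorphN ?rmorphM ?rmorphD ?rmorphB ?rmorph_nat; ring.
Qed.

End Constr.


Section Main.
Variable R : realType.
Local Notation C := (R[i]).
Local Notation M := ('M[C]_4).

Lemma core_upper (a b c d : R) (A1 A2 A3 A4 : M) :
  d <= c -> c <= b -> b <= a -> 0 <= d -> a + b + c + d = 1 ->
  observable A1 -> observable A2 -> observable A3 -> observable A4 ->
  commute_mx A1 A2 -> commute_mx A1 A4 -> commute_mx A3 A2 -> commute_mx A3 A4 ->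
  complex.Re (\tr (Dg (pv a b c d) *m (A1 *m (A2 + A4) + A3 *m (A2 - A4)))) / 2
    <= Num.max 1 (Num.sqrt (2 * ((a - d) ^+ 2 + (b - c) ^+ 2))).
Proof.
move=> hdc hcb hba hd hs o1 o2 o3 o4 c12 c14 c32 c34.
have hB := Bm_herm o1 o2 o3 o4 c12 c14 c32 c34.
case: (struct_case o1 o2 o3 o4 c12 c14 c32 c34) => [KL0|[S [hS SS SB]]].
- have BB : Bm A1 A2 A3 A4 *m Bm A1 A2 A3 A4 = 4%:R%:M.
    rewrite (mB2 o1 o2 o3 o4 c12 c14 c32 c34) KL0 addr0.
    apply/matrixP => i j; rewrite !mxE; case: (i == j) => /=; rewrite ?mulr1n ?mulr0n ?addr0 //.
    ring.
  have := bound_classical _ _ _ hd hs hB BB.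
  have hc : 0 <= c by lra.
  have hb : 0 <= b by lra.
  have ha : 0 <= a by lra.
  move=> /(_ ha hb hc) h.
  rewrite le_max; apply/orP; left; rewrite /Bm in h; lra.
- have h := bound_quantum hdc hcb hba hB hS SS SB (trBB o1 o2 o3 o4 c12 c14 c32 c34).
  by rewrite le_max; apply/orP; right; rewrite /Bm in h.
Qed.

Lemma cjK' n (U X : 'M[C]_n) : unitary U -> cj U (cj (adjmx U) X) = X.
Proof. by move=> uU; have := cjK X (unitary_adj uU); rewrite adjmxK. Qed.

Lemma chsh_cj (U rho A1 A2 A3 A4 : M) : unitary U ->
  chsh_value rho A1 A2 A3 A4 = complex.Re (\tr (cj U rho *m
     (cj U A1 *m (cj U A2 + cj U A4) + cj U A3 *m (cj U A2 - cj U A4)))) / 2.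
Proof.
move=> uU; rewrite /chsh_value -(cj_tr (rho *m _) uU) cjM // cjD !cjM // cjD cjB //.
Qed.

Lemma psd_diag (rho U : M) (p : 'I_4 -> R) : density rho -> unitary U ->
  cj U rho = Dg p -> forall i, 0 <= p i.
Proof.
move=> [_ hpsd _] uU e i.
have := hpsd (col i U).
have -> : (adjmx (col i U) *m rho *m col i U) 0 0 = cj U rho i i.
  rewrite /cj !mxE; apply: eq_bigr => k _; rewrite !mxE; congr (_ * _).
  by apply: eq_bigr => l _; rewrite !mxE.
by rewrite e /Dg !mxE eqxx mulr1n ler0c.
Qed.

Lemma sum_diag (rho U : M) (p : 'I_4 -> R) : density rho -> unitary U ->
  cj U rho = Dg p -> \sum_i p i = 1.
Proof.
move=> [_ _ htr] uU e.
have : \tr (cj U rho) = 1 by rewrite cj_tr.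
rewrite e /Dg mxtrace_diag.
under eq_bigr do rewrite mxE.
rewrite -rmorph_sum => h; apply/eqP; rewrite -(inj_eq (@complexI _)) h //.
Qed.

Lemma tr_DgDg (p e : 'I_4 -> R) :
  complex.Re (\tr (Dg p *m Dg e)) = \sum_i p i * e i.
Proof.
rewrite tr_diagM Re_sum; apply: eq_bigr => i _.
by rewrite /Dg !mxE eqxx mulr1n Re_realM.
Qed.

Lemma exist_xy (al be : R) : 0 < al ^+ 2 + be ^+ 2 ->
  exists x y : R, x ^+ 2 + y ^+ 2 = 1 /\
    (x + y) * al + (x - y) * be = Num.sqrt (2 * (al ^+ 2 + be ^+ 2)).
Proof.
move=> hQ; set Q := al ^+ 2 + be ^+ 2 in hQ *.
set nu := Num.sqrt Q; set s2 := Num.sqrt (2 : R).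
have nu2 : nu ^+ 2 = Q by rewrite sqr_sqrtr // ltW.
have s22 : s2 ^+ 2 = 2 by rewrite sqr_sqrtr.
have nup : 0 < nu by rewrite sqrtr_gt0.
have nu0 : nu != 0 by rewrite gt_eqF.
exists (s2 * (al + be) / (2 * nu)), (s2 * (al - be) / (2 * nu)); split.
  have -> : (s2 * (al + be) / (2 * nu)) ^+ 2 + (s2 * (al - be) / (2 * nu)) ^+ 2
          = s2 ^+ 2 * (al ^+ 2 + be ^+ 2) / (2 * nu ^+ 2) by field.
  by rewrite s22 nu2 -/Q; field; rewrite lt0r_neq0.
rewrite sqrtrM // -/s2 -/nu.
have -> : (s2 * (al + be) / (2 * nu) + s2 * (al - be) / (2 * nu)) * al +
    (s2 * (al + be) / (2 * nu) - s2 * (al - be) / (2 * nu)) * be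
    = s2 * (al ^+ 2 + be ^+ 2) / nu by field.
by rewrite -/Q -nu2; field.
Qed.

End Main.

Theorem mainTheorem7 (R : realType) (rho : 'M[R[i]]_4) (p1 p2 p3 p4 : R) :
  density rho ->
  char_poly rho = ('X - (p1%:C)%C%:P) * ('X - (p2%:C)%C%:P)
                  * ('X - (p3%:C)%C%:P) * ('X - (p4%:C)%C%:P) ->
  p1 >= p2 -> p2 >= p3 -> p3 >= p4 ->
  C4 rho = Num.max 1 (Num.sqrt (2 * ((p1 - p4) ^+ 2 + (p2 - p3) ^+ 2))).
Proof.
move=> hden hcp h12 h23 h34.
have hr : Defs.hermitian rho by case: hden.
have [U [uU eU]] := rho_sorted hr hcp.
have hp := psd_diag hden uU eU.
have p4ge0 : 0 <= p4 by have := hp 3%:R; rewrite pv3.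
have hsum : p1 + p2 + p3 + p4 = 1.
  by have := sum_diag hden uU eU; rewrite sum4R pv0 pv1 pv2 pv3.
set m := Num.max 1 _.
rewrite /C4; match goal with |- sup ?S = _ => set E := S end.
have ub : forall x, E x -> x <= m.
  move=> x [A1 [A2 [A3 [A4 [[o1 o2 o3 o4] [c12 c14 c32 c34] ->]]]]].
  rewrite (chsh_cj _ _ _ _ _ uU) eU.
  apply: core_upper => //;
    by [apply: observable_cj | apply: commute_cj].
have mem : E m.
  have [hF|hF] := lerP (Num.sqrt (2 * ((p1 - p4) ^+ 2 + (p2 - p3) ^+ 2))) 1.
  - have -> : m = 1 by rewrite /m max_l.
    have o1 : observable (1%:M : 'M[R[i]]_4).
      by split; [rewrite /Defs.hermitian adjmx1 | rewrite mul1mx].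
    exists 1%:M, 1%:M, 1%:M, 1%:M; split => //.
    rewrite /chsh_value subrr mulmx0 addr0 mul1mx mulmxDr mulmx1 mxtraceD.
    case: hden => _ _ ->; rewrite ReD /=; lra.
  - have -> : m = Num.sqrt (2 * ((p1 - p4) ^+ 2 + (p2 - p3) ^+ 2)).
      by rewrite /m max_r // ltW.
    have hQ : 0 < (p1 - p4) ^+ 2 + (p2 - p3) ^+ 2.
      rewrite lt_def addr_ge0 ?sqr_ge0 // andbT; apply/negP => /eqP e.
      by move: hF; rewrite e mulr0 sqrtr0 ltr10.
    have [x [y [hxy hv]]] := exist_xy hQ.
    have uU' := unitary_adj uU.
    have hcs : ((x%:C)%C * (x%:C)%C + (y%:C)%C * (y%:C)%C) = 1 :> R[i].
      by rewrite -!rmorphM -rmorphD -!expr2 hxy.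
    exists (cj (adjmx U) (A1c R)), (cj (adjmx U) (A2c x y)),
           (cj (adjmx U) (A3c R)), (cj (adjmx U) (A4c x y)); split.
    + split; apply: observable_cj => //; split.
      * exact: A1c_h.
      * exact: A1c2.
      * exact: A2c_h.
      * by rewrite A2c2 hcs.
      * exact: A3c_h.
      * exact: A3c2.
      * exact: A4c_h.
      * by rewrite A4c2 hcs.
    + split; apply: commute_cj => //.
      * exact: c12c.
      * exact: c14c.
      * exact: c32c.
      * exact: c34c.
    + rewrite (chsh_cj _ _ _ _ _ uU) eU !cjK' // Bc_diag tr_DgDg sum4R.
      rewrite !pv0 !pv1 !pv2 !pv3 -hv; lra.
apply/le_anti/andP; split.
  by apply: ge_sup; [exists m | exact: ub].
by apply: ub_le_sup; [exists m => x /ub | ].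
Qed.
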